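(* Let $N\ge1$. The group $\Phi_N$ is generated by $U=\{A^N,B^N\}\cup\{A^iB^jCB^{-j}A^{-i}:0\le i,j\le N-1\}$. Moreover, $\Phi_N$ has the presentation with generators $a,b,T_{i,j}$ ($0\le i,j\le N-1$), corresponding to $A^N$, $B^N$ and $A^iB^jCB^{-j}A^{-i}$ respectively, and the single relation $$aba^{-1}b^{-1}=\prod_{i=0}^{N-1}\prod_{j=0}^{N-1}T_{N-1-i,j},$$ the product being ordered with $i$ increasing in the outer product and $j$ increasing in the inner product.
   Context: Let $\bar\Gamma(2)=\Gamma(2)/\{\pm1\}\subset\mathrm{PSL}_2(\mathbb{Z})$, freely generated by the classes $A$ of $\begin{pmatrix}1&2\\0&1\end{pmatrix}$ and $B$ of $\begin{pmatrix}1&0\\2&1\end{pmatrix}$; $C=ABA^{-1}B^{-1}$. $\Phi_N$ is the kernel of the homomorphism $\bar\Gamma(2)\to(\mathbb{Z}/N\mathbb{Z})^2$ sending $A\mapsto(1,0)$ and $B\mapsto(0,1)$. *)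

(* Defs.v *)
From HB Require Import structures.
From mathcomp Require Import all_boot all_order all_algebra.
Set Implicit Arguments. Unset Strict Implicit. Unset Printing Implicit Defensive.
Import Order.TTheory GRing.Theory Num.Theory.

Section FreeGroup.
Variable X : eqType.

(* a letter (x, false) stands for x, (x, true) for x^-1 *)
Definition letter := (X * bool)%type.
Definition word := seq letter.

Definition linv (l : letter) : letter := (l.1, ~~ l.2).

Definition push (l : letter) (w : word) : word :=
  match w with
  | l' :: w' => if l' == linv l then w' else l :: w
  | [::] => [:: l]
  end.

Definition reduce (s : word) : word := foldr push [::] s.

(* the elements of the free group are the reduced words *)
Definition reduced (w : word) : Prop := reduce w = w.

Definition fmul (u v : word) : word := reduce (u ++ v).
Definition finv (u : word) : word := rev (map linv u).
Definition fprod (s : seq word) : word := reduce (flatten s).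
Definition fgen (x : X) : word := [:: (x, false)].
Definition fpow (u : word) (n : nat) : word := fprod (nseq n u).

Definition expsum (x : X) (w : word) : int :=
  (\sum_(l <- w | l.1 == x) (if l.2 then (-1)%R else 1%R))%R.

Definition in_subgroup_gen (S : word -> Prop) (w : word) : Prop :=
  exists s : seq (word * bool),
    (forall p, p \in s -> S p.1) /\
    w = fprod [seq (if p.2 then finv p.1 else p.1) | p <- s].

Definition in_normal_closure (r : word) (w : word) : Prop :=
  exists s : seq (word * bool),
    w = fprod [seq fprod [:: p.1; (if p.2 then finv r else r); finv p.1] | p <- s].
End FreeGroup.

Definition feval (X Y : eqType) (f : Y -> word X) (w : word Y) : word X :=
  fprod [seq (if l.2 then finv (f l.1) else f l.1) | l <- w].

(* ---------- Gamma(2)-bar, freely generated by A (= false), B (= true) ---------- *)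
Definition Gam2 := word bool.
Definition gA : Gam2 := fgen false.
Definition gB : Gam2 := fgen true.
Definition gC : Gam2 := fprod [:: gA; gB; finv gA; finv gB].

(* Phi_N : kernel of Gamma(2)-bar -> (Z/NZ)^2, A |-> (1,0), B |-> (0,1) *)
Definition Phi (N : nat) (w : Gam2) : Prop :=
  reduced w /\ (N%:Z %| expsum false w)%Z /\ (N%:Z %| expsum true w)%Z.

Definition Tw (i j : nat) : Gam2 :=
  fprod [:: fpow gA i; fpow gB j; gC; finv (fpow gB j); finv (fpow gA i)].

Definition inU (N : nat) (g : Gam2) : Prop :=
  g = fpow gA N \/ g = fpow gB N \/
  exists i j : nat, (i < N)%N /\ (j < N)%N /\ g = Tw i j.

(* generators: inl false = a, inl true = b, inr (i,j) = T_{i,j} *)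
Definition PGen (N : nat) := (bool + 'I_N * 'I_N)%type.
Definition pa (N : nat) : word (PGen N : eqType) := fgen (inl false : PGen N).
Definition pb (N : nat) : word (PGen N : eqType) := fgen (inl true : PGen N).
Definition pT (N : nat) (i j : 'I_N) : word (PGen N : eqType) := fgen (inr (i, j) : PGen N).

Definition prel (N : nat) : word (PGen N : eqType) :=
  fprod [:: pa N; pb N; finv (pa N); finv (pb N);
            finv (fprod [seq pT (rev_ord i) j | i <- enum 'I_N, j <- enum 'I_N])].

Definition pimg (N : nat) (y : PGen N) : Gam2 :=
  match y with
  | inl false => fpow gA N
  | inl true => fpow gB N
  | inr (i, j) => Tw i j
  end.

(* Main.v *)
Require Import Defs.
From HB Require Import structures.
From mathcomp Require Import all_boot all_order all_algebra.
From mathcomp Require Import zify.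
Import Defs.
Set Implicit Arguments. Unset Strict Implicit. Unset Printing Implicit Defensive.

Module A.

Section Red.
Variable X : eqType.
Implicit Types (l : letter X) (u v w z y : word X).

Lemma linvK : involutive (@linv X).
Proof. by case=> x []. Qed.

Definition irred (w : word X) := sorted (fun l l' => l' != linv l) w.

Lemma push_irred l w : irred w -> irred (push l w).
Proof.
case: w => [|l' w] //=; case: eqP => [_|/eqP ne] /=.
  by case: w => // ? ? /andP[].
by move=> H; rewrite /irred /= ne H.
Qed.

Lemma reduce_irred w : irred (reduce w).
Proof. by elim: w => //= l w IH; apply: push_irred. Qed.

Lemma irred_reduce w : irred w -> reduce w = w.
Proof.
elim: w => //= l w IH Hw.
have Hw' : irred w by case: w Hw {IH} => // ? ? /andP[].
rewrite IH //; case: w Hw Hw' {IH} => //= l' w /andP[ne _] _.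
by rewrite (negbTE ne).
Qed.

Lemma reduceK w : reduce (reduce w) = reduce w.
Proof. exact/irred_reduce/reduce_irred. Qed.

Lemma push_cancel l w : irred w -> push l (push (linv l) w) = w.
Proof.
case: w => [|l' w] /=; first by rewrite eqxx.
rewrite linvK; case: eqP => [->|/eqP ne] Hw.
  case: w Hw => [|l'' w] //= /andP[ne2 _].
  by rewrite (negbTE ne2).
by rewrite /= eqxx.
Qed.

Lemma reduce_cat u v : reduce (u ++ v) = foldr (@push X) (reduce v) u.
Proof. by rewrite /reduce foldr_cat. Qed.

Lemma foldr_push_irred z u : irred z -> irred (foldr (@push X) z u).
Proof. by move=> Hz; elim: u => //= l u IH; apply: push_irred. Qed.

Lemma reduce_catr u v : reduce (u ++ reduce v) = reduce (u ++ v).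
Proof. by rewrite !reduce_cat reduceK. Qed.

Lemma foldr_push_push z y l : irred y -> irred z ->
  foldr (@push X) z (push l y) = push l (foldr (@push X) z y).
Proof.
move=> Hy Hz; case: y Hy => [|l' y] //= Hy; case: eqP => [->|_] //=.
by rewrite push_cancel // foldr_push_irred.
Qed.

Lemma foldr_push_reduce z u : irred z -> foldr (@push X) z (reduce u) = foldr (@push X) z u.
Proof.
move=> Hz; elim: u => //= l u IH.
by rewrite foldr_push_push // ?IH // reduce_irred.
Qed.

Lemma reduce_catl u v : reduce (reduce u ++ v) = reduce (u ++ v).
Proof. by rewrite !reduce_cat foldr_push_reduce // reduce_irred. Qed.

Lemma finv_cons l u : finv (l :: u) = finv u ++ [:: linv l].
Proof. by rewrite /finv /= rev_cons cats1. Qed.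

Lemma finv_cat u v : finv (u ++ v) = finv v ++ finv u.
Proof. by rewrite /finv map_cat rev_cat. Qed.

Lemma finvK : involutive (@finv X).
Proof. by move=> u; rewrite /finv map_rev revK (mapK linvK). Qed.

Lemma reduce_finvl u : reduce (finv u ++ u) = [::].
Proof.
elim: u => //= l u IH.
rewrite finv_cons -catA /= reduce_cat /= -{2}(linvK l) push_cancel ?reduce_irred //.
by rewrite -reduce_cat.
Qed.

Lemma reduce_finvr u : reduce (u ++ finv u) = [::].
Proof. by rewrite -{1}(finvK u) reduce_finvl. Qed.
End Red.

End A.
Import A.

Module B.

Section FGdef.
Variable X : choiceType.
Definition FG := {w : word X | reduce w == w}.
HB.instance Definition _ := Choice.on FG.

Lemma reduce_idem (w : word X) : reduce (reduce w) == reduce w.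
Proof. by rewrite reduceK. Qed.

Definition phi (w : word X) : FG := exist _ (reduce w) (reduce_idem w).

Lemma val_phi w : val (phi w) = reduce w. Proof. by []. Qed.

Lemma phiK (x : FG) : phi (val x) = x.
Proof. by apply: val_inj; rewrite /= (eqP (valP x)). Qed.

Lemma phi_eq u v : reduce u = reduce v -> phi u = phi v.
Proof. by move=> e; apply: val_inj. Qed.

Definition fg1 : FG := phi [::].
Definition fgmul (x y : FG) : FG := phi (val x ++ val y).
Definition fginv (x : FG) : FG := phi (finv (val x)).

Lemma phi_cat u v : phi (u ++ v) = fgmul (phi u) (phi v).
Proof. by apply: val_inj; rewrite /= reduce_catl reduce_catr. Qed.

Lemma fgmulA : associative fgmul.
Proof.
move=> x y z; rewrite -[x]phiK -[y]phiK -[z]phiK -!phi_cat.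
by rewrite catA.
Qed.

Lemma fgmul1 : left_id fg1 fgmul.
Proof. by move=> x; rewrite -[x]phiK -phi_cat. Qed.

Lemma fgmulg1 : right_id fg1 fgmul.
Proof. by move=> x; rewrite -[x]phiK -phi_cat cats0. Qed.

Lemma fgmulV : left_inverse fg1 fginv fgmul.
Proof.
by move=> x; apply: val_inj; rewrite /= reduce_catl reduce_finvl.
Qed.

Lemma fgmulgV : right_inverse fg1 fginv fgmul.
Proof.
by move=> x; apply: val_inj; rewrite /= reduce_catr reduce_finvr.
Qed.

HB.instance Definition _ := isGroup.Build FG fgmulA fgmul1 fgmulg1 fgmulV fgmulgV.

End FGdef.

Local Open Scope group_scope.

Section FGTheory.
Variable X : choiceType.
Implicit Types u v w : word X.

Lemma phiM u v : phi (u ++ v) = phi u * phi v.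
Proof. exact: phi_cat. Qed.
Lemma phi1 : phi [::] = 1 :> FG X.
Proof. by []. Qed.
Lemma phiV u : phi (finv u) = (phi u)^-1.
Proof.
apply: (mulIg (phi u)); rewrite mulVg -phiM; apply: phi_eq.
by rewrite reduce_finvl.
Qed.
Lemma phi_reduce u : phi (reduce u) = phi u.
Proof. by apply: phi_eq; rewrite reduceK. Qed.

Lemma phi_flatten (L : seq (word X)) : phi (flatten L) = \prod_(x <- L) phi x.
Proof. by elim: L => [|x L IH]; rewrite ?big_nil ?big_cons //= phiM IH. Qed.

Lemma phi_fprod (L : seq (word X)) : phi (fprod L) = \prod_(x <- L) phi x.
Proof. by rewrite /fprod phi_reduce phi_flatten. Qed.
End FGTheory.

Section Ev.
Variables (X : eqType) (G : groupType) (g : X -> G).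
Definition ev (w : word X) : G :=
  \prod_(l <- w) (if l.2 then (g l.1)^-1 else g l.1).

Lemma ev_cat u v : ev (u ++ v) = ev u * ev v.
Proof. by rewrite /ev big_cat. Qed.
Lemma ev_cons l u : ev (l :: u) = (if l.2 then (g l.1)^-1 else g l.1) * ev u.
Proof. by rewrite /ev big_cons. Qed.
Lemma ev_nil : ev [::] = 1.
Proof. by rewrite /ev big_nil. Qed.

Lemma ev_push l u : ev (push l u) = ev (l :: u).
Proof.
case: u => [|l' u] //=; case: eqP => [->|_] //.
rewrite !ev_cons mulgA; case: l => x [] /=; by rewrite ?mulVg ?mulgV mul1g.
Qed.

Lemma ev_reduce u : ev (reduce u) = ev u.
Proof. by elim: u => //= l u IH; rewrite ev_push !ev_cons IH. Qed.

Lemma ev_finv u : ev (finv u) = (ev u)^-1.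
Proof.
elim: u => [|l u IH]; first by rewrite /finv /= ev_nil invg1.
rewrite finv_cons ev_cat IH !ev_cons ev_nil mulg1 invgM; congr (_ * _).
by case: l => x [] /=; rewrite ?invgK.
Qed.
End Ev.

Lemma phi_ev (X : choiceType) (w : word X) :
  phi w = ev (fun x => phi [:: (x, false)]) w.
Proof.
elim: w => [|l w IH]; first by rewrite ev_nil.
rewrite ev_cons -IH -cat1s phiM; case: l => x [] //=; by rewrite -phiV.
Qed.

Lemma feval_ev (X : eqType) (Y : choiceType) (f : X -> word Y) (v : word X) :
  feval f v = val (ev (fun x => phi (f x)) v).
Proof.
rewrite /feval /fprod -val_phi phi_flatten /ev big_map; congr val.
by apply: eq_bigr => l _; case: l.2; rewrite ?phiV.
Qed.

End B.
Import B.

Module C.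
Local Open Scope group_scope.

Ltac gs := repeat rewrite ?invgM ?invgK ?mulgA ?mulgK ?mulgVK ?mulgV ?mulVg ?mul1g ?mulg1 ?invg1; try done.

Section NC.
Variables (G : groupType) (r : G).
Definition ncl (x : G) := exists s : seq (G * bool),
  x = \prod_(p <- s) (p.1 * (if p.2 then r^-1 else r) * p.1^-1).

Lemma ncl1 : ncl 1.
Proof. by exists [::]; rewrite big_nil. Qed.

Lemma nclM x y : ncl x -> ncl y -> ncl (x * y).
Proof. by move=> [s ->] [t ->]; exists (s ++ t); rewrite big_cat. Qed.

Lemma nclV x : ncl x -> ncl x^-1.
Proof.
move=> [s ->]; exists (rev [seq (p.1, ~~ p.2) | p <- s]).
rewrite -{1}(revK s) -prodgV -map_rev big_map; apply: eq_bigr => p _ /=.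
by case: p.2 => /=; rewrite !invgM !invgK mulgA.
Qed.

Lemma nclJ g x : ncl x -> ncl (g * x * g^-1).
Proof.
move=> [s ->]; exists [seq (g * p.1, p.2) | p <- s].
rewrite big_map; elim: s => [|p s IH]; first by rewrite !big_nil; gs.
by rewrite !big_cons /= -IH; gs.
Qed.

Lemma nclr : ncl r.
Proof. by exists [:: (1, false)]; rewrite big_cons big_nil /= invg1 !mulg1 mul1g. Qed.

Definition geq x y := ncl (x * y^-1).

Lemma geq_refl x : geq x x.
Proof. by rewrite /geq mulgV; apply: ncl1. Qed.

Lemma geq_sym x y : geq x y -> geq y x.
Proof. by move=> /nclV; rewrite /geq invgM invgK. Qed.

Lemma geq_trans x y z : geq x y -> geq y z -> geq x z.
Proof.
move=> H1 H2; have := nclM H1 H2.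
by rewrite /geq mulgA mulgVK.
Qed.

Lemma geqM x x' y y' : geq x x' -> geq y y' -> geq (x * y) (x' * y').
Proof.
move=> H1 H2; have := nclM (nclJ x H2) H1.
by rewrite /geq invgM !mulgA mulgVK.
Qed.

Lemma geqV x y : geq x y -> geq x^-1 y^-1.
Proof.
move=> H; have := nclJ x^-1 (nclV H).
by rewrite /geq; gs.
Qed.

Lemma geq_eq x y : x = y -> geq x y.
Proof. by move=> ->; apply: geq_refl. Qed.

Lemma geq_r : geq r 1.
Proof. by rewrite /geq invg1 mulg1; apply: nclr. Qed.
End NC.

Section Ident.
Variables (G : groupType) (A B : G).
Definition Cm := A * B * A^-1 * B^-1.
Definition Tm i k := A ^+ i * B ^+ k * Cm * B ^- k * A ^- i.

Lemma expgSV (x : G) m : x ^- m.+1 = x^-1 * x ^- m.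
Proof. by rewrite expgSr invgM. Qed.

Lemma prowE i m : \prod_(k < m) Tm i k = A ^+ i * (A * B ^+ m * A^-1 * B ^- m) * A ^- i.
Proof.
elim: m => [|m IH]; first by rewrite big_ord0 !expg0; gs.
rewrite big_ord_recr /= IH /Tm /Cm expgSr; gs.
Qed.

Lemma betE Nn m : \prod_(k < m) (A ^+ (m.-1 - k) * (A * B ^+ Nn * A^-1 * B ^- Nn) * A ^- (m.-1 - k))
  = A ^+ m * B ^+ Nn * A ^- m * B ^- Nn.
Proof.
elim: m => [|m IH]; first by rewrite big_ord0 !expg0 invg1 !mulg1 mul1g mulgV.
rewrite big_ord_recl /=.
have -> : \prod_(i < m) (A ^+ (m.+1.-1 - lift ord0 i) * (A * B ^+ Nn * A^-1 * B ^- Nn) * A ^- (m.+1.-1 - lift ord0 i))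
   = \prod_(k < m) (A ^+ (m.-1 - k) * (A * B ^+ Nn * A^-1 * B ^- Nn) * A ^- (m.-1 - k)).
  apply: eq_bigr => i _; have e : (m.+1.-1 - lift ord0 i = m.-1 - i)%N by rewrite /= /bump /=; lia.
  by rewrite e.
rewrite IH subn0 /= expgSr; gs.
Qed.
End Ident.

End C.
Import C.

Module D.
Local Open Scope group_scope.

Ltac gs := repeat rewrite ?invgM ?invgK ?mulgA ?mulgK ?mulgVK ?mulgV ?mulVg ?mul1g ?mulg1 ?invg1; try done.

Lemma irred_nseq (X : eqType) m (l : letter X) : irred (nseq m l).
Proof.
elim: m => [|[|m] IH] //; rewrite /irred /= in IH *; rewrite IH andbT.
by case: l {IH} => x [] /=; apply/eqP => -[].
Qed.

Lemma fpow_gen (X : eqType) (x : X) m : fpow (fgen x) m = nseq m (x, false).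
Proof.
rewrite /fpow /fprod; have -> : flatten (nseq m (fgen x)) = nseq m (x, false).
  by elim: m => //= m ->.
exact/irred_reduce/irred_nseq.
Qed.

Lemma finv_nseq (X : eqType) m (l : letter X) : finv (nseq m l) = nseq m (linv l).
Proof. by rewrite /finv map_nseq rev_nseq. Qed.

Section Main.
Variable n : nat.
Local Notation N := n.+1.
Local Notation P := (PGen N).

Definition Ag : FG bool := phi gA.
Definition Bg : FG bool := phi gB.

Definition Psi (x : FG P) : FG bool := ev (fun y => phi (pimg y)) (val x).

Lemma Psi_phi w : Psi (phi w) = ev (fun y => phi (pimg y)) w.
Proof. by rewrite /Psi val_phi ev_reduce. Qed.

Lemma PsiM : {morph Psi : x y / x * y}.
Proof. by move=> x y; rewrite /Psi /= ev_reduce ev_cat. Qed.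

Lemma Psi1 : Psi 1 = 1.
Proof. by rewrite /Psi /= ev_nil. Qed.

Lemma PsiV x : Psi x^-1 = (Psi x)^-1.
Proof. by apply: (mulIg (Psi x)); rewrite -PsiM !mulVg Psi1. Qed.

Definition gen (y : P) : FG P := phi [:: (y, false)].
Definition ga := gen (inl false).
Definition gb := gen (inl true).
Definition gT (i j : nat) := gen (inr (inord i, inord j)).

Lemma Psi_gen y : Psi (gen y) = phi (pimg y).
Proof. by rewrite Psi_phi ev_cons ev_nil mulg1. Qed.

Lemma phi_fpowA m : phi (fpow gA m) = Ag ^+ m.
Proof.
rewrite /fpow phi_fprod big_nseq iter_mulg mulg1 //.
Qed.

Lemma phi_fpowB m : phi (fpow gB m) = Bg ^+ m.
Proof. by rewrite /fpow phi_fprod big_nseq iter_mulg mulg1. Qed.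

Lemma phi_gC : phi gC = Cm Ag Bg.
Proof. by rewrite /gC phi_fprod !big_cons big_nil !phiV /Cm mulg1 !mulgA. Qed.

Lemma phi_Tw i j : phi (Tw i j) = Tm Ag Bg i j.
Proof.
rewrite /Tw phi_fprod !big_cons big_nil !phiV phi_gC phi_fpowA phi_fpowB.
by rewrite /Tm mulg1 !mulgA.
Qed.

Lemma Psi_ga : Psi ga = Ag ^+ N.
Proof. by rewrite Psi_gen /= phi_fpowA. Qed.
Lemma Psi_gb : Psi gb = Bg ^+ N.
Proof. by rewrite Psi_gen /= phi_fpowB. Qed.
Lemma Psi_gT i j : (i < N)%N -> (j < N)%N -> Psi (gT i j) = Tm Ag Bg i j.
Proof. by move=> hi hj; rewrite Psi_gen /= phi_Tw !inordK. Qed.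

Definition Prow i m := \prod_(k < m) gT i k.
Definition Bet m := \prod_(k < m) Prow (m.-1 - k) N.

Lemma Psi_prod m (F : 'I_m -> FG P) : Psi (\prod_(k < m) F k) = \prod_(k < m) Psi (F k).
Proof. exact: (big_morph Psi PsiM Psi1). Qed.

Lemma Psi_Prow i m : (i < N)%N -> (m <= N)%N ->
  Psi (Prow i m) = Ag ^+ i * (Ag * Bg ^+ m * Ag^-1 * Bg ^- m) * Ag ^- i.
Proof.
move=> hi hm; rewrite Psi_prod -prowE; apply: eq_bigr => k _.
by rewrite Psi_gT // (leq_trans (ltn_ord k)).
Qed.

Lemma Psi_Bet m : (m <= N)%N -> Psi (Bet m) = Ag ^+ m * Bg ^+ N * Ag ^- m * Bg ^- N.
Proof.
move=> hm; rewrite Psi_prod -betE; apply: eq_bigr => k _.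
rewrite Psi_Prow //; lia.
Qed.
End Main.

End D.
Import D.

Module E.
Local Open Scope group_scope.

Ltac gs := repeat rewrite ?invgM ?invgK ?mulgA ?mulgK ?mulgVK ?mulgV ?mulVg ?mul1g ?mulg1 ?invg1; try done.

Section Tau.
Variable n : nat.
Local Notation N := n.+1.
Local Notation P := (PGen N).
Local Notation ga := (ga n).
Local Notation gb := (gb n).
Local Notation gT := (gT n).
Local Notation Prow := (Prow n).
Local Notation Bet := (Bet n).

Definition St := ('I_N * 'I_N)%type.
Definition K0 : St := (ord0, ord0).

Definition act1 (K : St) (l : letter bool) : St :=
  match l with
  | (false, false) => (ordS K.1, K.2)
  | (false, true) => (ord_pred K.1, K.2)
  | (true, false) => (K.1, ordS K.2)
  | (true, true) => (K.1, ord_pred K.2)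
  end.

Definition act (K : St) (w : word bool) : St := foldl act1 K w.

Lemma act1K K l : act1 (act1 K l) (linv l) = K.
Proof. by case: K => i j; case: l => [] [] [] /=; rewrite ?ordSK ?ord_predK. Qed.

Definition sigp (K : St) (x : bool) : FG P :=
  if x then (if (K.2 : nat) == n then Bet K.1 * gb else 1)
  else (Prow K.1 K.2)^-1 * (if (K.1 : nat) == n then ga else 1).

Definition sig (K : St) (l : letter bool) : FG P :=
  if l.2 then (sigp (act1 K l) l.1)^-1 else sigp K l.1.

Fixpoint tau (K : St) (w : word bool) : FG P :=
  match w with
  | [::] => 1
  | l :: w' => sig K l * tau (act1 K l) w'
  end.

Arguments act1 : simpl never.
Arguments sigp : simpl never.

Lemma sig_cancel K l : sig K l * sig (act1 K l) (linv l) = 1.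
Proof.
case: l => x [] /=; rewrite /sig /=; first by rewrite mulVg.
by rewrite (act1K K (x, false)) mulgV.
Qed.

Lemma tau_push K l u : tau K (push l u) = tau K (l :: u).
Proof.
case: u => [|l' u] //=; case: eqP => [->|_] //=.
by rewrite act1K mulgA sig_cancel mul1g.
Qed.

Lemma act_push K l u : act K (push l u) = act K (l :: u).
Proof.
case: u => [|l' u] //=; case: eqP => [->|_] //=.
by rewrite /act /= act1K.
Qed.

Lemma tau_reduce K u : tau K (reduce u) = tau K u.
Proof.
elim: u K => //= l u IH K.
by rewrite tau_push /= IH.
Qed.

Lemma act_reduce K u : act K (reduce u) = act K u.
Proof.
elim: u K => //= l u IH K.
by rewrite act_push /act /= -/(act _ _) IH.
Qed.

Lemma act_cat K u w : act K (u ++ w) = act (act K u) w.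
Proof. by rewrite /act foldl_cat. Qed.

Lemma tau_cat K u w : tau K (u ++ w) = tau K u * tau (act K u) w.
Proof.
elim: u K => [|l u IH] K /=; first by rewrite mul1g.
by rewrite IH mulgA.
Qed.

Lemma act_finv K u : act K u = K -> act K (finv u) = K.
Proof.
move=> H; rewrite -{1}H -act_cat -act_reduce reduce_finvr //.
Qed.

Lemma tau_finv K u : act K u = K -> tau K (finv u) = (tau K u)^-1.
Proof.
move=> H; apply: (mulIg (tau K u)); rewrite mulVg.
have := tau_reduce K (finv u ++ u); rewrite reduce_finvl tau_cat (act_finv H) /=; by move=> <-.

Qed.

Definition rep (K : St) := Ag ^+ K.1 * Bg ^+ K.2.

Lemma val_ordS (i : 'I_N) : ((i : nat).+1 %% N)%N = if (i : nat) == n then 0%N else (i : nat).+1.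
Proof.
case: eqP => [->|ne]; first by rewrite modnn.
by rewrite modn_small //; have := ltn_ord i; lia.
Qed.

Lemma Psi_sigp K x : Psi (sigp K x) = rep K * phi [:: (x, false)] * (rep (act1 K (x, false)))^-1.
Proof.
case: K => i j; rewrite /rep; case: x => /=; rewrite /sigp /=.
  rewrite val_ordS; case: eqP => [e|ne].
    rewrite PsiM (Psi_Bet (ltnW (ltn_ord i))) Psi_gb e expgSr expg0 mulg1; gs.
  rewrite Psi1 expgSr; gs.
rewrite val_ordS PsiM PsiV (Psi_Prow (ltn_ord i) (ltnW (ltn_ord j))); case: eqP => [e|ne].
  rewrite Psi_ga e expgSr expg0 mul1g; gs.
rewrite Psi1 expgSr; gs.
Qed.

Lemma phi_letter_true (x : bool) : phi [:: (x, true)] = (phi [:: (x, false)])^-1.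
Proof. by rewrite -phiV. Qed.

Lemma Psi_sig K l : Psi (sig K l) = rep K * phi [:: l] * (rep (act1 K l))^-1.
Proof.
case: l => x [] /=; rewrite /sig /=; last by rewrite Psi_sigp.
rewrite PsiV Psi_sigp.
rewrite (act1K K (x, true)).
by rewrite phi_letter_true; gs.
Qed.

Lemma Psi_tau K w : Psi (tau K w) = rep K * phi w * (rep (act K w))^-1.
Proof.
elim: w K => [|l w IH] K /=; first by rewrite Psi1 phi1; gs.
rewrite PsiM IH Psi_sig (phiM [:: l] w) /act /= -/(act _ _); gs.
Qed.
End Tau.

End E.
Import E.

Module F.
Local Open Scope group_scope.

Ltac gs := repeat rewrite ?invgM ?invgK ?mulgA ?mulgK ?mulgVK ?mulgV ?mulVg ?mul1g ?mulg1 ?invg1; try done.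

Arguments act1 : simpl never.
Arguments sigp : simpl never.

Section Images.
Variable n : nat.
Local Notation N := n.+1.
Local Notation P := (PGen N).
Local Notation ga := (ga n).
Local Notation gb := (gb n).
Local Notation gT := (gT n).
Local Notation Prow := (Prow n).
Local Notation Bet := (Bet n).
Local Notation St := (St n).
Local Notation act1 := (@act1 n).
Local Notation act := (@act n).
Local Notation tau := (@tau n).
Local Notation sigp := (@sigp n).
Local Notation sig := (@sig n).
Local Notation K0 := (K0 n).

Definition lA : letter bool := (false, false).
Definition lAi : letter bool := (false, true).
Definition lB : letter bool := (true, false).
Definition lBi : letter bool := (true, true).

Lemma vS (k : 'I_N) : (k < n)%N -> val (ordS k) = k.+1.
Proof. by move=> h; rewrite /= modn_small. Qed.

Lemma vSn (k : 'I_N) : (k : nat) = n -> val (ordS k) = 0%N.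
Proof. by move=> h; rewrite /= h modnn. Qed.

Lemma vP (k : 'I_N) : (0 < k)%N -> val (ord_pred k) = k.-1.
Proof.
move=> h; rewrite /=.
have -> : ((k + N).-1 = k.-1 + N)%N by lia.
by rewrite modnDr modn_small //; have := ltn_ord k; lia.
Qed.

Lemma vP' (k : 'I_N) : (0 < k)%N -> ((k + N).-1 %% N = k.-1)%N.
Proof. exact: vP. Qed.

Lemma Prow0 i : Prow i 0 = 1.
Proof. by rewrite /D.Prow big_ord0. Qed.
Lemma Bet0 : Bet 0 = 1.
Proof. by rewrite /D.Bet big_ord0. Qed.
Lemma ProwS i m : Prow i m.+1 = Prow i m * gT i m.
Proof. by rewrite /D.Prow big_ord_recr. Qed.
Lemma BetS m : Bet m.+1 = Prow m N * Bet m.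
Proof.
rewrite /D.Bet big_ord_recl subn0; congr (_ * _); apply: eq_bigr => i _.
by have -> : (m.+1.-1 - lift ord0 i = m.-1 - i)%N by rewrite /= /bump /=; lia.
Qed.

Lemma tau_cons K l w : tau K (l :: w) = sig K l * tau (act1 K l) w.
Proof. by []. Qed.
Lemma act_cons K l w : act K (l :: w) = act (act1 K l) w.
Proof. by []. Qed.

Lemma tauAp m (k : 'I_N) : (k + m < N)%N ->
  tau (k, ord0) (nseq m lA) = 1 /\ act (k, ord0) (nseq m lA) = (inord (k + m), ord0).
Proof.
elim: m k => [|m IH] k hk; first by rewrite addn0 inord_val.
rewrite tau_cons act_cons.
have e : act1 (k, ord0) lA = (ordS k, ord0) by [].
have hk' : (k < n)%N by lia.
have h2 : (ordS k + m < N)%N by rewrite vS //; lia.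
rewrite e; have [-> ->] := IH (ordS k) h2.
rewrite vS // addSnnS; split => //.
rewrite /sig /= /E.sigp /= Prow0; case: eqP => //; lia.
Qed.

Lemma tauBp m (i k : 'I_N) : (k + m < N)%N ->
  tau (i, k) (nseq m lB) = 1 /\ act (i, k) (nseq m lB) = (i, inord (k + m)).
Proof.
elim: m k => [|m IH] k hk; first by rewrite addn0 inord_val.
rewrite tau_cons act_cons.
have e : act1 (i, k) lB = (i, ordS k) by [].
have hk' : (k < n)%N by lia.
have h2 : (ordS k + m < N)%N by rewrite vS //; lia.
rewrite e; have [-> ->] := IH (ordS k) h2.
rewrite vS // addSnnS; split => //.
rewrite /sig /= /E.sigp /=; case: eqP => //; lia.
Qed.

Lemma tauBm m (i k : 'I_N) : (m <= k)%N ->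
  tau (i, k) (nseq m lBi) = 1 /\ act (i, k) (nseq m lBi) = (i, inord (k - m)).
Proof.
elim: m k => [|m IH] k hk; first by rewrite subn0 inord_val.
rewrite tau_cons act_cons.
have e : act1 (i, k) lBi = (i, ord_pred k) by [].
have hk' : (0 < k)%N by lia.
have h2 : (m <= ord_pred k)%N by rewrite vP //; lia.
rewrite e; have [-> ->] := IH (ord_pred k) h2.
rewrite vP //; have -> : (k.-1 - m = k - m.+1)%N by lia.
split => //.
rewrite /sig /= e /E.sigp /= vP' //; case: eqP => //; have := ltn_ord k; lia.
Qed.

Lemma tauAm m (k : 'I_N) : (m <= k)%N ->
  tau (k, ord0) (nseq m lAi) = 1 /\ act (k, ord0) (nseq m lAi) = (inord (k - m), ord0).
Proof.
elim: m k => [|m IH] k hk; first by rewrite subn0 inord_val.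
rewrite tau_cons act_cons.
have e : act1 (k, ord0) lAi = (ord_pred k, ord0) by [].
have hk' : (0 < k)%N by lia.
have h2 : (m <= ord_pred k)%N by rewrite vP //; lia.
rewrite e; have [-> ->] := IH (ord_pred k) h2.
rewrite vP //; have -> : (k.-1 - m = k - m.+1)%N by lia.
split => //.
rewrite /sig /= e /E.sigp /= vP' // Prow0; case: eqP => //; have := ltn_ord k; lia.
Qed.

Definition rG : FG P := phi (prel N).

Lemma enumI : enum 'I_N = index_enum 'I_N.
Proof. by rewrite enumT [index_enum _]unlock. Qed.

Lemma rG_eq : rG = ga * gb * ga^-1 * gb^-1 * (Bet N)^-1.
Proof.
rewrite /rG /prel phi_fprod !big_cons big_nil !phiV phi_fprod mulg1 !mulgA.
congr (_ * _ * _ * _ * _^-1).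
rewrite big_allpairs_dep /= !enumI /D.Bet; apply: eq_bigr => i _.
rewrite /D.Prow /=; apply: eq_bigr => j _.
rewrite /D.gT /gen /pT /fgen; congr (phi [:: (inr (_, _), false)]).
  by apply: val_inj; rewrite /= inordK //; have := ltn_ord i; lia.
by rewrite inord_val.
Qed.


Lemma middle (i j : 'I_N) :
  C.geq rG (sigp (i, j) false * sigp (ordS i, j) true * (sigp (i, ordS j) false)^-1
          * (sigp (i, j) true)^-1) (gT i j).
Proof.
rewrite /E.sigp /= !val_ordS.
case: (eqVneq (j : nat) n) => [ej|nj].
  rewrite Prow0 ej.
  case: (eqVneq (i : nat) n) => [ei|ni].
    rewrite ei Bet0.
    apply: (@geq_trans _ _ _ ((Prow n n)^-1 * (rG * Bet N) * (Bet n)^-1)).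
      by apply: geq_eq; rewrite rG_eq; gs.
    apply: (@geq_trans _ _ _ ((Prow n n)^-1 * (1 * Bet N) * (Bet n)^-1)).
      apply: geqM; last exact: geq_refl.
      apply: geqM; first exact: geq_refl.
      apply: geqM; first exact: geq_r.
      exact: geq_refl.
    by apply: geq_eq; rewrite BetS ProwS; gs.
  rewrite BetS; apply: geq_eq; rewrite ProwS; gs.
rewrite ProwS; apply: geq_eq; gs.
Qed.


Lemma nseqSr (X : Type) m (x : X) : nseq m.+1 x = nseq m x ++ [:: x].
Proof. by elim: m => //= m ->. Qed.

Lemma gC_eq : gC = [:: lA; lB; lAi; lBi].
Proof. by []. Qed.

Lemma inord0 : (inord 0 : 'I_N) = ord0.
Proof. by apply: val_inj; rewrite /= inordK. Qed.

Lemma ordS_n : ordS (inord n : 'I_N) = ord0.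
Proof. by apply: val_inj; rewrite /= inordK // modnn. Qed.

Lemma tau_pimg y : act K0 (pimg y) = K0 /\ C.geq rG (tau K0 (pimg y)) (gen y).
Proof.
case: y => [[]|[i j]] /=.
- rewrite fpow_gen nseqSr tau_cat act_cat.
  have [-> ->] := @tauBp n ord0 ord0 (ltnSn n).
  rewrite add0n /=.
  have e : act1 (ord0, inord n) lB = (ord0, ordS (inord n)) by [].
  rewrite e ordS_n; split => //; apply: geq_eq.
  rewrite /sig /= /E.sigp /= inordK // eqxx Bet0; gs.
- rewrite fpow_gen nseqSr tau_cat act_cat.
  have [-> ->] := @tauAp n ord0 (ltnSn n).
  rewrite add0n /=.
  have e : act1 (inord n, ord0) lA = (ordS (inord n), ord0) by [].
  rewrite e ordS_n; split => //; apply: geq_eq.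
  rewrite /sig /= /E.sigp /= inordK // eqxx Prow0; gs.
rewrite /Tw !fpow_gen !finv_nseq gC_eq /fprod tau_reduce act_reduce /= cats0.
rewrite !tau_cat !act_cat.
have hi := ltn_ord i; have hj := ltn_ord j.
have [-> ->] := @tauAp i ord0 hi.
rewrite add0n inord_val.
have [-> ->] := @tauBp j i ord0 hj.
rewrite add0n inord_val.
rewrite !tau_cons !act_cons.
have e1 : act1 (i, j) lA = (ordS i, j) by [].
have e2 : act1 (ordS i, j) lB = (ordS i, ordS j) by [].
have e3 : act1 (ordS i, ordS j) lAi = (i, ordS j) by rewrite /E.act1 /= ordSK.
have e4 : act1 (i, ordS j) lBi = (i, j) by rewrite /E.act1 /= ordSK.
rewrite e1 e2 e3 e4 /=.
rewrite -[linv (true, false)]/lBi -[linv (false, false)]/lAi tau_cat act_cat.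
have [-> ->] := @tauBm j i j (leqnn _).
rewrite subnn inord0.
have [-> ->] := @tauAm i i (leqnn _).
rewrite subnn inord0; split => //.
have -> : gen (inr (i, j)) = gT i j by rewrite /D.gT !inord_val.
apply: (geq_trans _ (middle i j)); apply: geq_eq.
rewrite /sig /= e3 e4; gs.
Qed.

End Images.

End F.
Import F.

Module G.
Import GRing.Theory Num.Theory.
Local Open Scope group_scope.

Ltac gs := repeat rewrite ?invgM ?invgK ?mulgA ?mulgK ?mulgVK ?mulgV ?mulVg ?mul1g ?mulg1 ?invg1; try done.

Arguments act1 : simpl never.
Arguments sigp : simpl never.

Section Final.
Variable n : nat.
Local Notation N := n.+1.
Local Notation P := (PGen N).
Local Notation ga := (ga n).
Local Notation gb := (gb n).
Local Notation gT := (gT n).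
Local Notation Prow := (Prow n).
Local Notation Bet := (Bet n).
Local Notation St := (St n).
Local Notation act1 := (@act1 n).
Local Notation act := (@act n).
Local Notation tau := (@tau n).
Local Notation K0 := (K0 n).
Local Notation rG := (rG n).

Definition img (l : letter P) : Gam2 := if l.2 then finv (pimg l.1) else pimg l.1.

Lemma phi_letter (l : letter P) : phi [:: l] = if l.2 then (gen l.1)^-1 else gen l.1.
Proof. by case: l => y [] //=; rewrite -phiV. Qed.

Lemma tau_img (v : word P) :
  act K0 (flatten [seq img l | l <- v]) = K0 /\
  C.geq rG (tau K0 (flatten [seq img l | l <- v])) (phi v).
Proof.
elim: v => [|l v [IHa IHt]] /=; first by split => //; apply: geq_refl.
rewrite act_cat tau_cat (phiM [:: l] v) phi_letter.
have [Ha Ht] := tau_pimg l.1.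
have [Ha' Ht'] : act K0 (img l) = K0 /\ C.geq rG (tau K0 (img l)) (if l.2 then (gen l.1)^-1 else gen l.1).
  rewrite /img; case: l.2 => //; rewrite act_finv // tau_finv //; split => //.
  exact: geqV.
rewrite Ha'; split => //; exact: geqM.
Qed.

Lemma act_finv_flat (s : seq (Gam2 * bool)) :
  (forall p, p \in s -> act K0 p.1 = K0) ->
  act K0 (flatten [seq (if p.2 then finv p.1 else p.1) | p <- s]) = K0.
Proof.
elim: s => [|p s IH] H //=.
rewrite act_cat; have Hp := H p (mem_head _ _).
have -> : act K0 (if p.2 then finv p.1 else p.1) = K0.
  by case: p.2 => //; rewrite act_finv.
by apply: IH => q hq; apply: H; rewrite in_cons hq orbT.
Qed.

Local Open Scope ring_scope.

Lemma expsum_cons (x : bool) (l : letter bool) w :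
  expsum x (l :: w) = (if l.1 == x then (if l.2 then -1 else 1) else 0) + expsum x w.
Proof. by rewrite /expsum big_cons; case: ifP => _ //; rewrite add0r. Qed.

Lemma act_expsum K w :
  ((act K w).1 : int) = ((((K.1 : nat) : int) + expsum false w) %% N)%Z /\
  ((act K w).2 : int) = ((((K.2 : nat) : int) + expsum true w) %% N)%Z.
Proof.
elim: w K => [|l w IH] K.
  rewrite /expsum !big_nil !addr0; split; rewrite modz_small //;
    [have := ltn_ord K.1 | have := ltn_ord K.2]; lia.
rewrite /act /= -/(act _ _); have [IH1 IH2] := IH (act1 K l).
rewrite IH1 IH2 !expsum_cons; case: K {IH IH1 IH2} => i j.
case: l => [[] []]; rewrite /E.act1 /= ?add0r; split => //.
- rewrite -modz_nat modzDml -[in RHS]modzDr; congr (_ %% _)%Z; lia.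
- rewrite -modz_nat modzDml; congr (_ %% _)%Z; lia.
- rewrite -modz_nat modzDml -[in RHS]modzDr; congr (_ %% _)%Z; lia.
- rewrite -modz_nat modzDml; congr (_ %% _)%Z; lia.
Qed.
End Final.

End G.
Import G.

Module H.
Import GRing.Theory Num.Theory.
Local Open Scope group_scope.

Ltac gs := repeat rewrite ?invgM ?invgK ?mulgA ?mulgK ?mulgVK ?mulgV ?mulVg ?mul1g ?mulg1 ?invg1; try done.

Section Final2.
Variable n : nat.
Local Notation N := n.+1.
Local Notation P := (PGen N).
Local Notation ga := (ga n).
Local Notation gb := (gb n).
Local Notation Bet := (Bet n).
Local Notation act := (@act n).
Local Notation tau := (@tau n).
Local Notation K0 := (K0 n).
Local Notation rG := (rG n).
Local Notation img := (@img n).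

Lemma act_K0 w : act K0 w = K0 <->
  (N%:Z %| expsum false w)%Z /\ (N%:Z %| expsum true w)%Z.
Proof.
have [h1 h2] := act_expsum K0 w; rewrite /= add0r in h1; rewrite /= add0r in h2.
split.
  move=> E; rewrite E /= in h1 h2.
  by split; apply/dvdz_mod0P; rewrite -?h1 -?h2.
move=> [/dvdz_mod0P d1 /dvdz_mod0P d2]; rewrite d1 in h1; rewrite d2 in h2.
move: h1 h2; case: (act K0 w) => a b /= h1 h2.
by congr pair; apply: val_inj => /=; lia.
Qed.

Lemma Psi_rG : Psi rG = 1.
Proof.
rewrite rG_eq !PsiM !PsiV Psi_ga Psi_gb Psi_Bet //; gs.
Qed.

Lemma surj w : Phi N w -> exists v : word P, reduced v /\ feval (@pimg N) v = w.
Proof.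
move=> [Hr [d1 d2]]; have HK : act K0 w = K0 by apply/act_K0.
exists (val (tau K0 w)); split; first by apply/eqP; exact: (valP (tau K0 w)).
rewrite feval_ev.
have -> : ev (fun x => phi (pimg x)) (val (tau K0 w)) = Psi (tau K0 w) by [].
rewrite Psi_tau HK /rep /= cats0 !reduceK.
exact: Hr.
Qed.

Lemma feval_img v : feval (@pimg N) v = reduce (flatten [seq img l | l <- v]).
Proof. by []. Qed.

Lemma into v : Phi N (feval (@pimg N) v).
Proof.
split; first by rewrite feval_img /reduced reduceK.
apply/act_K0; rewrite feval_img act_reduce.
by have [-> _] := tau_img v.
Qed.

Lemma kernel v : reduced v ->
  (feval (@pimg N) v = [::] <-> in_normal_closure (prel N) v).
Proof.
move=> Hv; split.
  move=> H; have [_ Ht] := tau_img v.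
  rewrite -tau_reduce -feval_img H /= in Ht.
  have := geq_sym Ht; rewrite /C.geq invg1 mulg1 => -[s Hs].
  exists [seq (val p.1, p.2) | p <- s].
  rewrite -Hv -val_phi Hs /fprod -val_phi phi_flatten !big_map; congr val.
  apply: eq_bigr => p _; rewrite phi_fprod !big_cons big_nil phiV phiK mulg1 !mulgA.
  by case: p.2 => /=; rewrite ?phiV.
move=> [s Hs].
rewrite feval_ev.
have -> : ev (fun x => phi (pimg x)) v = Psi (phi v) by rewrite Psi_phi.
rewrite Hs phi_fprod big_map (big_morph (@Psi n) (@PsiM n) (@Psi1 n)) big1 // => p _.
rewrite phi_fprod !big_cons big_nil !PsiM phiV PsiV Psi1.
by case: p.2; rewrite ?phiV ?PsiV -/(rG) Psi_rG; gs.
Qed.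

Lemma inU_pimg g : inU N g -> exists y : P, g = pimg y.
Proof.
case=> [->|[->|[i [j [hi [hj ->]]]]]].
- by exists (inl false).
- by exists (inl true).
by exists (inr (Ordinal hi, Ordinal hj)).
Qed.

Lemma subgroup w : Phi N w <-> in_subgroup_gen (inU N) w.
Proof.
split.
  move=> /surj [v [_ <-]].
  exists [seq (pimg l.1, l.2) | l <- v]; split.
    move=> p /mapP [[y b] _ ->] /=.
    by case: y => [[]|[i j]]; [right; left | left | right; right; exists i, j].
  by rewrite /feval -map_comp.
move=> [s [Hs ->]]; split; first by rewrite /reduced /fprod reduceK.
apply/act_K0; rewrite /fprod act_reduce; apply: act_finv_flat => p /Hs.
by move=> /inU_pimg [y ->]; have [-> _] := tau_pimg y.
Qed.
End Final2.


End H.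
Import H.

Theorem proposition6 (N : nat) (hN : (0 < N)%N) :
  (* Phi_N is the subgroup generated by U *)
  (forall w : Gam2, Phi N w <-> in_subgroup_gen (inU N) w) /\
  (* the map from the free group on a, b, T_{i,j} lands in Phi_N ... *)
  (forall v : word (PGen N : eqType), reduced v -> Phi N (feval (@pimg N) v)) /\
  (* ... is onto Phi_N ... *)
  (forall w : Gam2, Phi N w ->
     exists v : word (PGen N : eqType), reduced v /\ feval (@pimg N) v = w) /\
  (* ... and its kernel is the normal closure of the single relator *)
  (forall v : word (PGen N : eqType), reduced v ->
     (feval (@pimg N) v = [::] <-> in_normal_closure (prel N) v)).
Proof.
case: N hN => // n _.
split; first exact: subgroup.
split; first by move=> v _; apply: into.
split; first exact: surj.
exact: kernel.
Qed.
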